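(* Fix a threshold $R\in(0,1)$ and, when $\Delta_S^B\neq 0$, let $\tilde i=\Delta_O^B/\Delta_S^B$. Then: (i) if $|\Delta_S^B|\le 2\Delta_O^B$, every type $i\in[-1/2,1/2]$ accepts the recommendation; (ii) if $\Delta_S^B<-2\Delta_O^B$, every type $i\ge\tilde i$ accepts the recommendation; (iii) if $\Delta_S^B>2\Delta_O^B$, every type $i\le\tilde i$ accepts the recommendation.
   Context: Setting. Consumer types are $i\in[-1/2,1/2]$, distributed according to a continuous cumulative distribution function $F$ with full support on $[-1/2,1/2]$. A product has a quality vector $(Q_1,Q_2)\in\{0,1\}^2$; a type-$i$ consumer gets payoff $(1/2+i)Q_1+(1/2-i)Q_2$ from it. The versions $(1,1),(1,0),(0,1),(0,0)$ have prior probabilities $q_H,q_1,q_2,q_L$ respectively, all strictly positive and summing to $1$. One product carries a recommendation from a sender whose type is drawn from $F$ independently of the product; given a threshold $R\in(0,1)$, the sender gives a buy recommendation $B$ if her payoff from the product is at least $R$ and a don't-buy recommendation $D$ otherwise. Let $\phi_1(R)=1-F(R-1/2)$, $\phi_2(R)=F(1/2-R)$, $\pi^B=q_H+q_1\phi_1(R)+q_2\phi_2(R)$ and $\pi^D=1-\pi^B$. Posteriors: $p^B_H=q_H/\pi^B$, $p^B_1=q_1\phi_1(R)/\pi^B$, $p^B_2=q_2\phi_2(R)/\pi^B$, $p^B_L=0$; $p^D_H=0$, $p^D_1=q_1(1-\phi_1(R))/\pi^D$, $p^D_2=q_2(1-\phi_2(R))/\pi^D$, $p^D_L=q_L/\pi^D$.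 For $r\in\{B,D\}$ let $U_i^r=p_H^r+(1/2+i)p_1^r+(1/2-i)p_2^r$ and $U_i^0=q_H+(1/2+i)q_1+(1/2-i)q_2$. A receiver of type $i$ accepts the recommendation if $U_i^B\ge U_i^0$ (equivalently, $U_i^0\ge U_i^D$). The objective and subjective effects of $r\in\{B,D\}$ are $\Delta_O^r=p_H^r-q_H+\frac{p_1^r-q_1}{2}+\frac{p_2^r-q_2}{2}$ and $\Delta_S^r=(p_2^r-q_2)-(p_1^r-q_1)$. *)

(* Defs.v *)
From Stdlib Require Import Reals Lra.
Open Scope R_scope.

Definition is_cdf_full_support (F : R -> R) : Prop :=
  continuity F /\
  (forall x y, x <= y -> F x <= F y) /\
  (forall x, x <= -1/2 -> F x = 0) /\
  (forall x, 1/2 <= x -> F x = 1) /\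
  (forall x y, -1/2 <= x -> x < y -> y <= 1/2 -> F x < F y).

(* prior probabilities of versions (1,1),(1,0),(0,1),(0,0) *)
Definition valid_prior (qH q1 q2 qL : R) : Prop :=
  0 < qH /\ 0 < q1 /\ 0 < q2 /\ 0 < qL /\ qH + q1 + q2 + qL = 1.

Definition phi1 (F : R -> R) (Rt : R) : R := 1 - F (Rt - 1/2).
Definition phi2 (F : R -> R) (Rt : R) : R := F (1/2 - Rt).

Definition piB (F : R -> R) (qH q1 q2 : R) (Rt : R) : R :=
  qH + q1 * phi1 F Rt + q2 * phi2 F Rt.

(* posteriors after a buy recommendation B *)
Definition pBH F qH q1 q2 Rt : R := qH / piB F qH q1 q2 Rt.
Definition pB1 F qH q1 q2 Rt : R := q1 * phi1 F Rt / piB F qH q1 q2 Rt.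
Definition pB2 F qH q1 q2 Rt : R := q2 * phi2 F Rt / piB F qH q1 q2 Rt.

Definition UB F qH q1 q2 Rt (i : R) : R :=
  pBH F qH q1 q2 Rt + (1/2 + i) * pB1 F qH q1 q2 Rt + (1/2 - i) * pB2 F qH q1 q2 Rt.
Definition U0 (qH q1 q2 : R) (i : R) : R :=
  qH + (1/2 + i) * q1 + (1/2 - i) * q2.

Definition accepts F qH q1 q2 Rt (i : R) : Prop := UB F qH q1 q2 Rt i >= U0 qH q1 q2 i.

Definition DeltaOB F qH q1 q2 Rt : R :=
  pBH F qH q1 q2 Rt - qH + (pB1 F qH q1 q2 Rt - q1) / 2 + (pB2 F qH q1 q2 Rt - q2) / 2.
Definition DeltaSB F qH q1 q2 Rt : R :=
  (pB2 F qH q1 q2 Rt - q2) - (pB1 F qH q1 q2 Rt - q1).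

(* Main.v *)
Require Import Defs.
From Stdlib Require Import Reals Lra Psatz.
Open Scope R_scope.

Lemma F01 F x : is_cdf_full_support F -> 0 <= F x <= 1.
Proof.
  intros [_ [Hm [H0 [H1 _]]]].
  split.
  - destruct (Rle_dec x (-1/2)). rewrite H0; lra.
    rewrite <- (H0 (-1/2)) by lra. apply Hm; lra.
  - destruct (Rle_dec (1/2) x). rewrite H1; lra.
    rewrite <- (H1 (1/2)) by lra. apply Hm; lra.
Qed.

Theorem corollary1 (F : R -> R) (qH q1 q2 qL Rt : R) :
  is_cdf_full_support F ->
  valid_prior qH q1 q2 qL ->
  0 < Rt < 1 ->
  let DO := DeltaOB F qH q1 q2 Rt in
  let DS := DeltaSB F qH q1 q2 Rt in
  let itilde := DO / DS in
  (Rabs DS <= 2 * DO ->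
     forall i, -1/2 <= i <= 1/2 -> accepts F qH q1 q2 Rt i) /\
  (DS < -2 * DO ->
     forall i, -1/2 <= i <= 1/2 -> itilde <= i -> accepts F qH q1 q2 Rt i) /\
  (DS > 2 * DO ->
     forall i, -1/2 <= i <= 1/2 -> i <= itilde -> accepts F qH q1 q2 Rt i).
Proof.
  intros HF [HqH [Hq1 [Hq2 [HqL Hs]]]] HR DO DS itilde.
  assert (Ha := F01 F (Rt - 1/2) HF).
  assert (Hb := F01 F (1/2 - Rt) HF).
  assert (Hacc : forall i, accepts F qH q1 q2 Rt i <-> DO - i * DS >= 0).
  { intro i. unfold accepts, DO, DS, DeltaOB, DeltaSB, UB, U0. split; intro; lra. }
  assert (HDO : 0 <= DO).
  { unfold DO, DeltaOB, pBH, pB1, pB2.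
    set (a := phi1 F Rt). set (b := phi2 F Rt).
    assert (0 <= a <= 1) by (unfold a, phi1; lra).
    assert (0 <= b <= 1) by (unfold b, phi2; lra).
    set (P := piB F qH q1 q2 Rt).
    assert (HP : P = qH + q1 * a + q2 * b) by reflexivity.
    assert (HPp : 0 < P) by nra.
    assert (E : qH / P - qH + (q1 * a / P - q1) / 2 + (q2 * b / P - q2) / 2
               = (qH * (1 - (qH + (q1+q2)/2)) + (q1*a+q2*b) * (1/2 - (qH + (q1+q2)/2))) / P).
    { field_simplify_eq; [rewrite HP; ring | lra]. }
    rewrite E. apply Rmult_le_pos; [| left; apply Rinv_0_lt_compat; lra].
    destruct (Rle_dec (qH + (q1+q2)/2) (1/2)).
    - assert (0 <= q1*a+q2*b) by nra. nra.
    - assert (q1*a+q2*b <= q1 + q2) by nra.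
      assert ((q1*a+q2*b) * (1/2 - (qH + (q1+q2)/2)) >= (q1+q2) * (1/2 - (qH + (q1+q2)/2))) by nra.
      nra. }
  split; [|split].
  - intros H i Hi. apply Hacc.
    assert (i * DS <= Rabs i * Rabs DS) by (rewrite <- Rabs_mult; apply Rle_abs).
    assert (Rabs i <= 1/2) by (apply Rabs_le; lra).
    assert (0 <= Rabs DS) by apply Rabs_pos.
    nra.
  - intros H i Hi Hit. apply Hacc.
    assert (DS < 0) by lra.
    unfold itilde in Hit.
    apply Rmult_le_compat_neg_l with (r := DS) in Hit; [|lra].
    replace (DS * (DO / DS)) with DO in Hit by (field; lra). nra.
  - intros H i Hi Hit. apply Hacc.
    assert (DS > 0) by lra.
    unfold itilde in Hit.
    apply Rmult_le_compat_l with (r := DS) in Hit; [|lra].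
    replace (DS * (DO / DS)) with DO in Hit by (field; lra). nra.
Qed.
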